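(* In any execution of Algorithm $\mathsf{AG}$ (described in the context) with a guild, there exist a process $p_i$ in the maximal guild and a quorum $Q_i\in\mathcal{Q}_i$ for $p_i$ such that every process in $Q_i$ receives a $\mathrm{DistributeS}$ message from $p_i$ before it sends a $\mathrm{DistributeT}$ message.
   Context: System model: a finite set $\mathcal{P}=\{p_1,\dots,p_n\}$ of processes communicating asynchronously over authenticated point-to-point links; every message sent from a correct process to a correct process is eventually delivered. A process that follows its protocol is correct; others (faulty, Byzantine) may behave arbitrarily. $F\subseteq\mathcal{P}$ denotes the (unknown) set of faulty processes of an execution. For $\mathcal{A}\subseteq 2^{\mathcal{P}}$, write $\mathcal{A}^*=\{A' : A'\subseteq A,\ A\in\mathcal{A}\}$. An asymmetric fail-prone system is an array $\mathbb{F}=[\mathcal{F}_1,\dots,\mathcal{F}_n]$ with $\mathcal{F}_i\subseteq 2^{\mathcal{P}}$. An asymmetric Byzantine quorum system for $\mathbb{F}$ is an array $\mathbb{Q}=[\mathcal{Q}_1,\dots,\mathcal{Q}_n]$ with $\mathcal{Q}_i\subseteq 2^{\mathcal{P}}$ (quorums for $p_i$) satisfying: (consistency) for all $i,j$, all $Q_i\in\mathcal{Q}_i$, $Q_j\in\mathcal{Q}_j$, $F_{ij}\in\mathcal{F}_i^*\cap\mathcal{F}_j^*$: $Q_i\cap Q_j\not\subseteq F_{ij}$; (availability) for all $i$ and $F_i\in\mathcal{F}_i$ there is $Q_i\in\mathcal{Q}_i$ with $F_i\cap Q_i=\emptyset$. A kernel for $p_i$ is a set $K\subseteq\mathcal{P}$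 intersecting every $Q\in\mathcal{Q}_i$; $\mathcal{K}_i$ is the set of kernels for $p_i$. A correct process $p_i$ is wise if $F\in\mathcal{F}_i^*$. A guild is a set $\mathcal{G}$ of wise processes such that every $p_i\in\mathcal{G}$ has some $Q_i\in\mathcal{Q}_i$ with $Q_i\subseteq\mathcal{G}$. An execution with a guild is one in which a nonempty guild exists; the maximal guild $\mathcal{G}_{max}$ is the union of all guilds. Asymmetric reliable broadcast (arb-broadcast / arb-deliver) guarantees, in every execution with a guild: if a correct process arb-broadcasts $m$, every process of $\mathcal{G}_{max}$ eventually arb-delivers $m$; for each sender, all processes of $\mathcal{G}_{max}$ that arb-deliver from it deliver the same message; if some process of $\mathcal{G}_{max}$ arb-delivers a message from a sender, all processes of $\mathcal{G}_{max}$ eventually arb-deliver a message from that sender; a correct process arb-delivers at most one message per sender, and from a correct sender only a message it arb-broadcast. Algorithm $\mathsf{AG}$ (code of $p_i$; each correct process invokes ag-propose$(x_i)$ exactly once; each guarded ''upon there being ...'' action executes at most once, message handlers once per message). State: sets $S_i,T_i,U_i$ initially empty, boolean $sentT$ initially false. (1) Upon ag-propose$(x_i)$: arb-broadcast $(p_i,x_i)$. (2) Upon arb-delivering $(p_j,x_j)$ from $p_j$: $S_i\gets S_i\cup\{(p_j,x_j)\}$. (3) Upon there being $Q\in\mathcal{Q}_i$ such that for every $p_j\in Q$ some pair $(p_j,\cdot)\in S_i$: send $\langle\mathrm{DistributeS},p_i,S_i\rangle$ to all. (4) For a received $\langle\mathrm{DistributeS},p_j,S_j\rangle$: once $S_j\subseteq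 S_i$, provided $sentT$ is false at that moment, set $T_i\gets T_i\cup S_j$ and send $\langle\mathrm{Ack},p_i\rangle$ to $p_j$. (5) Upon Ack received from every member of some $Q\in\mathcal{Q}_i$: send Ready to all. (6) Upon Ready received from every member of some $Q\in\mathcal{Q}_i$: send Confirm to all. (7) Upon Confirm received from every member of some $K\in\mathcal{K}_i$: send Confirm to all. (8) Upon Confirm received from every member of some $Q\in\mathcal{Q}_i$: send $\langle\mathrm{DistributeT},p_i,T_i\rangle$ to all and set $sentT\gets$ true. (9) For a received $\langle\mathrm{DistributeT},p_j,T_j\rangle$ from $p_j$: once $T_j\subseteq S_i$, set $U_i\gets U_i\cup T_j$. (10) Upon DistributeT received from every member of some $Q\in\mathcal{Q}_i$: ag-deliver$(U_i)$. *)

(* Defs.v *)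
From mathcomp Require Import all_boot.
Set Implicit Arguments.
Unset Strict Implicit.
Unset Printing Implicit Defensive.

Section Trust.
Variable P : finType.

Definition in_star (A : {set {set P}}) (X : {set P}) : Prop :=
  exists2 Y, Y \in A & X \subset Y.

Definition asym_quorum_system (Fs Qs : P -> {set {set P}}) : Prop :=
  (forall i j (Qi Qj Fij : {set P}),
      Qi \in Qs i -> Qj \in Qs j -> in_star (Fs i) Fij -> in_star (Fs j) Fij ->
      ~~ (Qi :&: Qj \subset Fij))
  /\ (forall i (Fi : {set P}), Fi \in Fs i ->
      exists2 Q, Q \in Qs i & [disjoint Fi & Q]).

Definition kernel (Qs : P -> {set {set P}}) (i : P) (K : {set P}) : Prop :=
  forall Q, Q \in Qs i -> ~~ [disjoint K & Q].

Definition wise (Fs : P -> {set {set P}}) (F : {set P}) (i : P) : Prop :=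
  i \notin F /\ in_star (Fs i) F.

Definition guild (Fs Qs : P -> {set {set P}}) (F : {set P}) (G : {set P}) : Prop :=
  forall i, i \in G -> wise Fs F i /\ exists2 Q, Q \in Qs i & Q \subset G.

Definition has_guild Fs Qs F : Prop := exists2 G, guild Fs Qs F G & G != set0.

(* membership in the maximal guild (the union of all guilds) *)
Definition in_Gmax Fs Qs F (i : P) : Prop := exists2 G, guild Fs Qs F G & i \in G.

End Trust.

Section AG.
Variables (P : finType) (V : Type).
Variables (Qs : P -> {set {set P}}) (F : {set P}).

Definition pset := P * V -> Prop.
Definition psub (A B : pset) : Prop := forall x, A x -> B x.
Definition punion (A B : pset) : pset := fun x => A x \/ B x.
Definition pempty : pset := fun _ => False.

(* point-to-point messages; the sender identity p_j of DistributeS /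
   DistributeT / Ack is the (authenticated) sender of the message *)
Inductive msg :=
| DistributeS of pset
| AckM
| ReadyM
| ConfirmM
| DistributeT of pset.

Record lstate := LState {
  proposed : bool;
  sS : pset; sT : pset; sU : pset;
  sentT : bool;
  fired3 : bool; fired5 : bool; fired6 : bool; fired7 : bool; fired10 : bool;
  ackFrom : {set P}; readyFrom : {set P}; confirmFrom : {set P};
  distTFrom : {set P};
  pendS : seq (P * pset);   (* received DistributeS waiting for S_j ⊆ S_i *)
  pendT : seq (P * pset)    (* received DistributeT waiting for T_j ⊆ S_i *)
}.

Definition linit : lstate :=
  LState false pempty pempty pempty false false false false false false
         set0 set0 set0 set0 [::] [::].

(* global configuration: local states, in-transit messages
   (sender, destination, message), ag-deliver outputs *)
Record config := Config {
  lst : P -> lstate;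
  net : seq (P * P * msg);
  agOut : P -> option pset
}.

Definition cinit : config := Config (fun _ => linit) [::] (fun _ => None).

Definition upd {A : Type} (f : P -> A) (i : P) (a : A) : P -> A :=
  fun j => if j == i then a else f j.

Definition send_all (i : P) (m : msg) : seq (P * P * msg) :=
  [seq (i, d, m) | d <- enum P].

Inductive event :=
| Idle
| ByzSend of P & P & msg
| Propose of P & V               (* (1) ag-propose(x) and arb-broadcast (p_i,x) *)
| ArbDeliver of P & P & V
| Receive of P & P & msg         (* Receive s d m : d receives m from s *)
| DoDistS of P
| DoAck of P & P & pset
| DoReady of P
| DoConfirm6 of P
| DoConfirm7 of P
| DoDistT of P
| DoU of P & P & pset
| DoDeliver of P.

Definition setl (c : config) (i : P) (l : lstate) (nt : seq (P * P * msg)) :=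
  Config (upd (lst c) i l) nt (agOut c).

Definition step (c : config) (e : event) (c' : config) : Prop :=
  match e with
  | Idle => c' = c
  | ByzSend s d m => s \in F /\ c' = Config (lst c) (net c ++ [:: (s, d, m)]) (agOut c)
  | Propose i x =>
      let l := lst c i in
      i \notin F /\ ~~ proposed l /\
      c' = setl c i
        (LState true (sS l) (sT l) (sU l) (sentT l) (fired3 l) (fired5 l) (fired6 l)
                (fired7 l) (fired10 l) (ackFrom l) (readyFrom l) (confirmFrom l)
                (distTFrom l) (pendS l) (pendT l)) (net c)
  | ArbDeliver i j x =>
      let l := lst c i in
      i \notin F /\
      c' = setl c i
        (LState (proposed l) (punion (sS l) (fun p => p = (j, x))) (sT l) (sU l)
                (sentT l) (fired3 l) (fired5 l) (fired6 l)
                (fired7 l) (fired10 l) (ackFrom l) (readyFrom l) (confirmFrom l)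
                (distTFrom l) (pendS l) (pendT l)) (net c)
  | Receive s d m =>
      let l := lst c d in
      d \notin F /\
      exists l1 l2, net c = l1 ++ (s, d, m) :: l2 /\
      c' = setl c d
        (match m with
         | DistributeS Sj =>
             LState (proposed l) (sS l) (sT l) (sU l) (sentT l) (fired3 l) (fired5 l)
               (fired6 l) (fired7 l) (fired10 l) (ackFrom l) (readyFrom l)
               (confirmFrom l) (distTFrom l) (rcons (pendS l) (s, Sj)) (pendT l)
         | AckM =>
             LState (proposed l) (sS l) (sT l) (sU l) (sentT l) (fired3 l) (fired5 l)
               (fired6 l) (fired7 l) (fired10 l) (s |: ackFrom l) (readyFrom l)
               (confirmFrom l) (distTFrom l) (pendS l) (pendT l)
         | ReadyM =>
             LState (proposed l) (sS l) (sT l) (sU l) (sentT l) (fired3 l) (fired5 l)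
               (fired6 l) (fired7 l) (fired10 l) (ackFrom l) (s |: readyFrom l)
               (confirmFrom l) (distTFrom l) (pendS l) (pendT l)
         | ConfirmM =>
             LState (proposed l) (sS l) (sT l) (sU l) (sentT l) (fired3 l) (fired5 l)
               (fired6 l) (fired7 l) (fired10 l) (ackFrom l) (readyFrom l)
               (s |: confirmFrom l) (distTFrom l) (pendS l) (pendT l)
         | DistributeT Tj =>
             LState (proposed l) (sS l) (sT l) (sU l) (sentT l) (fired3 l) (fired5 l)
               (fired6 l) (fired7 l) (fired10 l) (ackFrom l) (readyFrom l)
               (confirmFrom l) (s |: distTFrom l) (pendS l) (rcons (pendT l) (s, Tj))
         end)
        (l1 ++ l2)
  | DoDistS i =>
      let l := lst c i in
      i \notin F /\ ~~ fired3 l /\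
      (exists2 Q, Q \in Qs i & forall j, j \in Q -> exists x, sS l (j, x)) /\
      c' = setl c i
        (LState (proposed l) (sS l) (sT l) (sU l) (sentT l) true (fired5 l) (fired6 l)
                (fired7 l) (fired10 l) (ackFrom l) (readyFrom l) (confirmFrom l)
                (distTFrom l) (pendS l) (pendT l))
        (net c ++ send_all i (DistributeS (sS l)))
  | DoAck i j Sj =>
      let l := lst c i in
      i \notin F /\ psub Sj (sS l) /\
      exists l1 l2, pendS l = l1 ++ (j, Sj) :: l2 /\
      c' = if sentT l then
             setl c i
               (LState (proposed l) (sS l) (sT l) (sU l) (sentT l) (fired3 l) (fired5 l)
                  (fired6 l) (fired7 l) (fired10 l) (ackFrom l) (readyFrom l)
                  (confirmFrom l) (distTFrom l) (l1 ++ l2) (pendT l)) (net c)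
           else
             setl c i
               (LState (proposed l) (sS l) (punion (sT l) Sj) (sU l) (sentT l) (fired3 l)
                  (fired5 l) (fired6 l) (fired7 l) (fired10 l) (ackFrom l) (readyFrom l)
                  (confirmFrom l) (distTFrom l) (l1 ++ l2) (pendT l))
               (net c ++ [:: (i, j, AckM)])
  | DoReady i =>
      let l := lst c i in
      i \notin F /\ ~~ fired5 l /\
      (exists2 Q, Q \in Qs i & Q \subset ackFrom l) /\
      c' = setl c i
        (LState (proposed l) (sS l) (sT l) (sU l) (sentT l) (fired3 l) true (fired6 l)
                (fired7 l) (fired10 l) (ackFrom l) (readyFrom l) (confirmFrom l)
                (distTFrom l) (pendS l) (pendT l))
        (net c ++ send_all i ReadyM)
  | DoConfirm6 i =>
      let l := lst c i in
      i \notin F /\ ~~ fired6 l /\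
      (exists2 Q, Q \in Qs i & Q \subset readyFrom l) /\
      c' = setl c i
        (LState (proposed l) (sS l) (sT l) (sU l) (sentT l) (fired3 l) (fired5 l) true
                (fired7 l) (fired10 l) (ackFrom l) (readyFrom l) (confirmFrom l)
                (distTFrom l) (pendS l) (pendT l))
        (net c ++ send_all i ConfirmM)
  | DoConfirm7 i =>
      let l := lst c i in
      i \notin F /\ ~~ fired7 l /\
      (exists K, kernel Qs i K /\ K \subset confirmFrom l) /\
      c' = setl c i
        (LState (proposed l) (sS l) (sT l) (sU l) (sentT l) (fired3 l) (fired5 l)
                (fired6 l) true (fired10 l) (ackFrom l) (readyFrom l) (confirmFrom l)
                (distTFrom l) (pendS l) (pendT l))
        (net c ++ send_all i ConfirmM)
  | DoDistT i =>
      let l := lst c i in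
      i \notin F /\ ~~ sentT l /\
      (exists2 Q, Q \in Qs i & Q \subset confirmFrom l) /\
      c' = setl c i
        (LState (proposed l) (sS l) (sT l) (sU l) true (fired3 l) (fired5 l)
                (fired6 l) (fired7 l) (fired10 l) (ackFrom l) (readyFrom l)
                (confirmFrom l) (distTFrom l) (pendS l) (pendT l))
        (net c ++ send_all i (DistributeT (sT l)))
  | DoU i j Tj =>
      let l := lst c i in
      i \notin F /\ psub Tj (sS l) /\
      exists l1 l2, pendT l = l1 ++ (j, Tj) :: l2 /\
      c' = setl c i
        (LState (proposed l) (sS l) (sT l) (punion (sU l) Tj) (sentT l) (fired3 l)
                (fired5 l) (fired6 l) (fired7 l) (fired10 l) (ackFrom l) (readyFrom l)
                (confirmFrom l) (distTFrom l) (pendS l) (l1 ++ l2))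
        (net c)
  | DoDeliver i =>
      let l := lst c i in
      i \notin F /\ ~~ fired10 l /\
      (exists2 Q, Q \in Qs i & Q \subset distTFrom l) /\
      c' = Config (upd (lst c) i
        (LState (proposed l) (sS l) (sT l) (sU l) (sentT l) (fired3 l) (fired5 l)
                (fired6 l) (fired7 l) true (ackFrom l) (readyFrom l) (confirmFrom l)
                (distTFrom l) (pendS l) (pendT l)))
        (net c) (upd (agOut c) i (Some (sU l)))
  end.

Definition is_execution (c : nat -> config) (e : nat -> event) : Prop :=
  c 0 = cinit /\ forall t, step (c t) (e t) (c t.+1).

End AG.

Arguments Idle {P V}.
Arguments ByzSend {P V}.
Arguments Propose {P V}.
Arguments ArbDeliver {P V}.
Arguments Receive {P V}.
Arguments DoDistS {P V}.
Arguments DoAck {P V}.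
Arguments DoReady {P V}.
Arguments DoConfirm6 {P V}.
Arguments DoConfirm7 {P V}.
Arguments DoDistT {P V}.
Arguments DoU {P V}.
Arguments DoDeliver {P V}.
Arguments DistributeS {P V}.
Arguments AckM {P V}.
Arguments ReadyM {P V}.
Arguments ConfirmM {P V}.
Arguments DistributeT {P V}.

(* Safety properties of asymmetric reliable broadcast, as assumptions on the
   arb-deliver events of an execution with a guild. *)
Definition arb_safety (P : finType) (V : Type) (Fs Qs : P -> {set {set P}})
    (F : {set P}) (e : nat -> event P V) : Prop :=
  (forall i k j x y t t', in_Gmax Fs Qs F i -> in_Gmax Fs Qs F k ->
      e t = ArbDeliver i j x -> e t' = ArbDeliver k j y -> x = y)
  /\ (forall i j x y t t', e t = ArbDeliver i j x -> e t' = ArbDeliver i j y -> t = t')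
  /\ (forall i j x t, j \notin F -> e t = ArbDeliver i j x ->
      exists2 t', t' < t & e t' = Propose j x).

(* Main.v *)
Require Import Defs.
From mathcomp Require Import all_boot.
From Stdlib Require List.
Set Implicit Arguments.
Unset Strict Implicit.

Lemma In_cat {T} (x : T) s1 s2 : List.In x (s1 ++ s2) <-> List.In x s1 \/ List.In x s2.
Proof. elim: s1 => [|a s IH] /=; first by intuition. rewrite IH; tauto. Qed.

Lemma In_mid {T} (x y : T) l1 l2 : List.In x (l1 ++ l2) -> List.In x (l1 ++ y :: l2).
Proof. rewrite !In_cat /=; tauto. Qed.

Lemma In_rcons {T} (x y : T) s : List.In x (rcons s y) -> List.In x s \/ x = y.
Proof. rewrite -cats1 In_cat /=; intuition. Qed.

Lemma In_send_all (P : finType) V (i s d : P) (m m0 : msg P V) :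
  List.In (s, d, m) (send_all i m0) -> s = i /\ m = m0.
Proof.
rewrite /send_all; elim: (enum P) => [|a l IH] //= [[-> _ ->]|]; auto.
Qed.

Section Pf.
Variables (P : finType) (V : Type) (Qs : P -> {set {set P}}) (F : {set P})
  (c : nat -> config P V) (e : nat -> event P V).

Definition MsgOK (s d : P) (m : msg P V) (t : nat) : Prop :=
  match m with
  | AckM => exists2 ta, ta < t & exists Sj, e ta = DoAck s d Sj /\
       sentT (lst (c ta) s) = false /\ exists2 tr, tr < ta & e tr = Receive d s (DistributeS Sj)
  | ReadyM => exists2 t', t' < t & e t' = DoReady s
  | ConfirmM => exists2 t', t' < t & (e t' = DoConfirm6 s \/ e t' = DoConfirm7 s)
  | _ => True
  end.

Definition InvC (cf : config P V) t :=
  (forall q x, List.In x (pendS (lst cf q)) -> exists2 tr, tr < t & e tr = Receive x.1 q (DistributeS x.2))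
  /\ (forall s d m, List.In (s,d,m) (net cf) -> s \notin F -> MsgOK s d m t)
  /\ (forall s d, s \in ackFrom (lst cf d) -> s \notin F -> MsgOK s d AckM t)
  /\ (forall s d, s \in readyFrom (lst cf d) -> s \notin F -> MsgOK s d ReadyM t)
  /\ (forall s d, s \in confirmFrom (lst cf d) -> s \notin F -> MsgOK s d ConfirmM t).

Lemma MsgOK_mono s d m t : MsgOK s d m t -> MsgOK s d m t.+1.
Proof. case: m => //= [||] [x Hx H]; exists x => //; exact: ltnW. Qed.

Lemma InvC_mono cf t : InvC cf t -> InvC cf t.+1.
Proof.
case=> [Hp [Hn [Ha [Hr Hc]]]]; split; [|split; [|split; [|split]]].
- move=> q x /Hp [tr ? ?]; exists tr => //; exact: ltnW.
- by move=> *; apply: MsgOK_mono; apply: Hn.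
- by move=> *; apply: MsgOK_mono; apply: Ha.
- by move=> *; apply: MsgOK_mono; apply: Hr.
- by move=> *; apply: MsgOK_mono; apply: Hc.
Qed.

Lemma frame t cf (l' : P -> lstate P V) nt ag : InvC cf t ->
  (forall q x, List.In x (pendS (l' q)) -> List.In x (pendS (lst cf q)) \/
      exists2 tr, tr < t.+1 & e tr = Receive x.1 q (DistributeS x.2)) ->
  (forall s d, s \in ackFrom (l' d) -> s \in ackFrom (lst cf d) \/ (s \notin F -> MsgOK s d AckM t.+1)) ->
  (forall s d, s \in readyFrom (l' d) -> s \in readyFrom (lst cf d) \/ (s \notin F -> MsgOK s d ReadyM t.+1)) ->
  (forall s d, s \in confirmFrom (l' d) -> s \in confirmFrom (lst cf d) \/ (s \notin F -> MsgOK s d ConfirmM t.+1)) ->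
  (forall s d m, List.In (s,d,m) nt -> List.In (s,d,m) (net cf) \/ (s \notin F -> MsgOK s d m t.+1)) ->
  InvC (Config l' nt ag) t.+1.
Proof.
move=> /InvC_mono [Hp [Hn [Ha [Hr Hc]]]] Hp' Ha' Hr' Hc' Hn'.
split; [|split; [|split; [|split]]] => /=.
- by move=> q x /Hp' [/Hp|].
- by move=> s d m /Hn' [/Hn|] //; auto.
- by move=> s d /Ha' [/Ha|] //; auto.
- by move=> s d /Hr' [/Hr|] //; auto.
- by move=> s d /Hc' [/Hc|] //; auto.
Qed.

Lemma frame_upd t cf i L nt ag : InvC cf t ->
  pendS L = pendS (lst cf i) -> ackFrom L = ackFrom (lst cf i) ->
  readyFrom L = readyFrom (lst cf i) -> confirmFrom L = confirmFrom (lst cf i) ->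
  (forall s d m, List.In (s,d,m) nt -> List.In (s,d,m) (net cf) \/ (s \notin F -> MsgOK s d m t.+1)) ->
  InvC (Config (upd (lst cf) i L) nt ag) t.+1.
Proof.
move=> Hi E1 E2 E3 E4 Hn; apply: (@frame t cf _ nt ag Hi) => //; rewrite /upd.
- by move=> q x; case: (q =P i) => [->|_]; rewrite ?E1; left.
- by move=> s d; case: (d =P i) => [->|_]; rewrite ?E2; left.
- by move=> s d; case: (d =P i) => [->|_]; rewrite ?E3; left.
- by move=> s d; case: (d =P i) => [->|_]; rewrite ?E4; left.
Qed.


Ltac sameP := move=> ? ?; rewrite /upd; case: ifP => [/eqP->|_]; by left.

Lemma sentT_step (cf : config P V) ev cf' q : step Qs F cf ev cf' -> sentT (lst cf q) -> sentT (lst cf' q).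
Proof.
case: ev => [|s d m|i x|i j x|s d m|i|i j Sj|i|i|i|i|i j Tj|i] /=.
- by move=> ->.
- by case=> _ ->.
- by case=> _ [_ ->]; rewrite /setl /upd /=; case: ifP => [/eqP->|].
- by case=> _ ->; rewrite /setl /upd /=; case: ifP => [/eqP->|].
- by case=> _ [l1 [l2 [_ ->]]]; rewrite /setl /upd /=; case: ifP => [/eqP->|] //; case: m.
- by case=> _ [_ [_ ->]]; rewrite /setl /upd /=; case: ifP => [/eqP->|].
- by case=> _ [_ [l1 [l2 [_ ->]]]]; case: ifP => Hs; rewrite /setl /upd /=; case: ifP => [/eqP->|].
- by case=> _ [_ [_ ->]]; rewrite /setl /upd /=; case: ifP => [/eqP->|].
- by case=> _ [_ [_ ->]]; rewrite /setl /upd /=; case: ifP => [/eqP->|].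
- by case=> _ [_ [_ ->]]; rewrite /setl /upd /=; case: ifP => [/eqP->|].
- by case=> _ [_ [_ ->]]; rewrite /setl /upd /=; case: ifP => [/eqP->|].
- by case=> _ [_ [l1 [l2 [_ ->]]]]; rewrite /setl /upd /=; case: ifP => [/eqP->|].
- by case=> _ [_ [_ ->]]; rewrite /setl /upd /=; case: ifP => [/eqP->|].
Qed.

Hypothesis Hstep : forall t, step Qs F (c t) (e t) (c t.+1).

Lemma inv_step t : InvC (c t) t -> InvC (c t.+1) t.+1.
Proof.
move=> Hi; have [Hp [Hn [Ha [Hr Hc]]]] := Hi.
move: (Hstep t); case E: (e t) => [|s d m|i x|i j x|s d m|i|i j Sj|i|i|i|i|i j Tj|i] /=.
- move=> ->; exact: InvC_mono.
- case=> sF ->; apply: (@frame t (c t) _ _ _ Hi) => //; try by left.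
  move=> s' d' m' /In_cat [|/= [[= <- _ _]|//]]; [by left|by right; rewrite sF].
- case=> _ [_ ->]; apply: frame_upd => //; by left.
- case=> _ ->; apply: frame_upd => //; by left.
- case=> dF [l1 [l2 [Hnet ->]]].
  have Hnet' : forall s' d' m', List.In (s', d', m') (l1 ++ l2) ->
      List.In (s', d', m') (net (c t)) \/ (s' \notin F -> MsgOK s' d' m' t.+1).
    by move=> s' d' m' /(@In_mid _ _ (s, d, m)); rewrite -Hnet; left.
  have Hin : List.In (s, d, m) (net (c t)) by rewrite Hnet; apply/In_cat; right; left.
  case: m E Hnet Hin => [Sj|||| Tj] E Hnet Hin; apply: (@frame t (c t) _ _ _ Hi) => //; try sameP.
  + move=> q x; rewrite /upd; case: ifP => [/eqP->|_]; last by left.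
    move=> H; case: (In_rcons H) => [|->]; first by left.
    by right; exists t => //; rewrite E.
  + move=> s' d'; rewrite /upd; case: ifP => [/eqP->|_]; last by left.
    rewrite /= in_setU1 => /orP [/eqP->|]; last by left.
    by right => sF; exact: (MsgOK_mono (Hn _ _ _ Hin sF)).
  + move=> s' d'; rewrite /upd; case: ifP => [/eqP->|_]; last by left.
    rewrite /= in_setU1 => /orP [/eqP->|]; last by left.
    by right => sF; exact: (MsgOK_mono (Hn _ _ _ Hin sF)).
  + move=> s' d'; rewrite /upd; case: ifP => [/eqP->|_]; last by left.
    rewrite /= in_setU1 => /orP [/eqP->|]; last by left.
    by right => sF; exact: (MsgOK_mono (Hn _ _ _ Hin sF)).
- case=> _ [_ [_ ->]]; apply: frame_upd => //.
  by move=> s' d' m' /In_cat [|/In_send_all [-> ->]]; [left|right].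
- case=> iF [Hsub [l1 [l2 [Hpend ->]]]].
  have HpS : forall q x, List.In x (pendS (upd (lst (c t)) i
      (LState (proposed (lst (c t) i)) (sS (lst (c t) i)) (punion (sT (lst (c t) i)) Sj) (sU (lst (c t) i)) (sentT (lst (c t) i)) (fired3 (lst (c t) i))
                  (fired5 (lst (c t) i)) (fired6 (lst (c t) i)) (fired7 (lst (c t) i)) (fired10 (lst (c t) i)) (ackFrom (lst (c t) i)) (readyFrom (lst (c t) i))
                  (confirmFrom (lst (c t) i)) (distTFrom (lst (c t) i)) (l1 ++ l2) (pendT (lst (c t) i))) q)) ->
      List.In x (pendS (lst (c t) q)) \/ exists2 tr, tr < t.+1 & e tr = Receive x.1 q (DistributeS x.2).
    move=> q x; rewrite /upd; case: ifP => [/eqP->|_]; last by left.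
    by rewrite /= Hpend => /(@In_mid _ _ (j, Sj)); left.
  case: ifP => Hst; apply: (@frame t (c t) _ _ _ Hi) => //; try sameP.
  + move=> q x; rewrite /upd; case: ifP => [/eqP->|_]; last by left.
    by rewrite /= Hpend => /(@In_mid _ _ (j, Sj)); left.
  + by left.
  + move=> s' d' m' /In_cat [|/= [[= <- <- <-]|//]]; first by left.
    right => _ /=; exists t => //; exists Sj; split => //; split => //.
    have /Hp : List.In (j, Sj) (pendS (lst (c t) i)) by rewrite Hpend; apply/In_cat; right; left.
    by [].
- case=> _ [_ [_ ->]]; apply: frame_upd => //.
  move=> s' d' m' /In_cat [|/In_send_all [-> ->]]; [by left|right => _ /=; by exists t].
- case=> _ [_ [_ ->]]; apply: frame_upd => //.
  move=> s' d' m' /In_cat [|/In_send_all [-> ->]]; [by left|right => _ /=; exists t => //; by left].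
- case=> _ [_ [_ ->]]; apply: frame_upd => //.
  move=> s' d' m' /In_cat [|/In_send_all [-> ->]]; [by left|right => _ /=; exists t => //; by right].
- case=> _ [_ [_ ->]]; apply: frame_upd => //.
  by move=> s' d' m' /In_cat [|/In_send_all [-> ->]]; [left|right].
- case=> _ [_ [l1 [l2 [_ ->]]]]; apply: frame_upd => //; by left.
- case=> _ [_ [_ ->]]; apply: frame_upd => //; by left.
Qed.

End Pf.

From Stdlib Require Import Classical.

Theorem lemma3p5 (P : finType) (V : Type) (Fs Qs : P -> {set {set P}})
    (F : {set P}) (c : nat -> config P V) (e : nat -> event P V) :
  asym_quorum_system Fs Qs ->
  is_execution Qs F c e ->
  arb_safety Fs Qs F e ->
  has_guild Fs Qs F ->
  exists2 i, in_Gmax Fs Qs F i &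
    exists2 Q, Q \in Qs i &
      forall q, q \in Q -> q \notin F ->
      forall t, e t = DoDistT q ->
        exists2 t', t' < t & exists S, e t' = Receive i q (DistributeS S).
Proof.
move=> [Hcons _] [H0 Hst] _ [G HG HG0].
have Inv : forall t, InvC F c e (c t) t.
  elim => [|t IH]; last exact: (inv_step Hst).
  rewrite H0 /InvC /=; split; [|split; [|split; [|split]]].
  - by move=> q x [].
  - by move=> s d m [].
  - by move=> s d; rewrite in_set0.
  - by move=> s d; rewrite in_set0.
  - by move=> s d; rewrite in_set0.
have sentMono : forall q t0 t1, e t0 = DoDistT q -> t0 < t1 -> sentT (lst (c t1) q).
  move=> q t0 t1 E; elim: t1 => // t1 IH; rewrite ltnS leq_eqVlt => /orP [/eqP <-|/IH H].
    by move: (Hst t0); rewrite E => -[_ [_ [_ ->]]]; rewrite /setl /upd /= eqxx.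
  exact: (sentT_step (Hst t1)).
case: (classic (exists t r, in_Gmax Fs Qs F r /\ e t = DoReady r)) => [[t [r [Hr Et]]]|Hno].
  move: (Hst t); rewrite Et => -[rF [_ [[Q HQ HQs] _]]].
  exists r => //; exists Q => // q qQ qF t0 Et0.
  have [_ [_ [Ha _]]] := Inv t.
  have [ta Hta [Sj [Eta [Hsf [tr Htr Etr]]]]] := Ha q r (subsetP HQs q qQ) qF.
  exists tr; last by exists Sj.
  apply: (ltn_trans Htr); case: (ltngtP ta t0) => // H.
    by move: (sentMono q t0 ta Et0 H); rewrite Hsf.
  by move: Eta; rewrite H Et0.
have noConf : forall t g, in_Gmax Fs Qs F g ->
    e t = DoConfirm6 g \/ e t = DoConfirm7 g -> False.
  elim/ltn_ind => t IH g [Gg HGg gG] [E|E].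
  - move: (Hst t); rewrite E => -[gF [_ [[Q HQ HQs] _]]].
    have [[gF' Hw] [Q' HQ' HQ'G]] := HGg g gG.
    move: (Hcons g g Q Q' F HQ HQ' Hw Hw) => /subsetPn [x /setIP [xQ xQ'] xF].
    have [_ [_ [_ [Hr _]]]] := Inv t.
    have [t' _ Et'] := Hr x g (subsetP HQs x xQ) xF.
    apply: Hno; exists t', x; split => //; exists Gg => //; exact: (subsetP HQ'G).
  - move: (Hst t); rewrite E => -[gF [_ [[K [HK HKs]] _]]].
    have [[gF' Hw] [Q' HQ' HQ'G]] := HGg g gG.
    case: (boolP [exists y, (y \in K) && (y \in Q')]) => [/existsP [y /andP [yK yQ']]|Hn]; last first.
      case/negP: (HK Q' HQ'); apply/pred0P => x /=; apply/negbTE/negP => /andP [xK xQ']; case/negP: Hn.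
      by apply/existsP; exists x; rewrite xK xQ'.
    have yG : y \in Gg by exact: (subsetP HQ'G).
    have yF : y \notin F by have [[]] := HGg y yG.
    have [_ [_ [_ [_ Hc]]]] := Inv t.
    have [t' Ht' Et'] := Hc y g (subsetP HKs y yK) yF.
    by apply: (IH t' Ht' y) => //; exists Gg.
case/set0Pn: HG0 => i iG; have [_ [Q HQ HQG]] := HG i iG.
exists i; first by exists G.
exists Q => // q qQ qF t0 Et0; exfalso.
move: (Hst t0); rewrite Et0 => -[_ [_ [[Qq HQq HQqs] _]]].
have qG := subsetP HQG q qQ.
have [[_ Hw] [Q' HQ' HQ'G]] := HG q qG.
move: (Hcons q q Qq Q' F HQq HQ' Hw Hw) => /subsetPn [x /setIP [xQ xQ'] xF].
have [_ [_ [_ [_ Hc]]]] := Inv t0.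
have [t' _ Et'] := Hc x q (subsetP HQqs x xQ) xF.
apply: (noConf t' x) => //; exists G => //; exact: (subsetP HQ'G).
Qed.
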